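(* Let $G=(V,E)$ be a comparability graph with $V=\{v_1,\dots,v_n\}$. For distinct $u_1,\dots,u_k\in V$, let $G\setminus u_1\cdots u_k$ be the subgraph of $G$ induced on $V\setminus\{u_1,\dots,u_k\}$. Then $$\varepsilon(G)\ge\sum_{\sigma\in\mathfrak S_n}\prod_{k=0}^{n-1}\frac{1}{\chi\big(G\setminus v_{\sigma(1)}v_{\sigma(2)}\cdots v_{\sigma(k)}\big)},$$ where the $k=0$ factor is $1/\chi(G)$, $\mathfrak S_n$ is the symmetric group on $[n]$, and $\chi$ denotes chromatic number.
   Context: A comparability graph is a simple undirected graph $G=(V,E)$ for which there is a partial order on $V$ under which two distinct vertices are comparable iff they are adjacent. For an undirected simple graph $G=(V,E)$, $\varepsilon(G)$ denotes the maximum, over all acyclic orientations of $E$, of the number of linear extensions of the partial order induced on $V$ (where $u<v$ iff there is a directed path from $u$ to $v$; a linear extension of a poset on an $n$-element set is an order-preserving bijection onto $[n]$). *)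

(* Defs.v *)
From mathcomp Require Import all_boot all_order all_algebra all_fingroup.
Set Implicit Arguments. Unset Strict Implicit. Unset Printing Implicit Defensive.

(* A simple undirected graph on vertex set 'I_n is a symmetric irreflexive
   relation e : rel 'I_n (the vertices v_1..v_n are the ordinals 0..n-1). *)

Definition comparability_graph (n : nat) (e : rel 'I_n) : Prop :=
  exists R : rel 'I_n,
    reflexive R /\ antisymmetric R /\ transitive R /\
    forall u v, u != v -> e u v = (R u v || R v u).

Definition orientation (n : nat) (e : rel 'I_n) (o : {set 'I_n * 'I_n}) : bool :=
  [forall u, forall v, (e u v == (((u, v) \in o) || ((v, u) \in o)))
                       && ~~ (((u, v) \in o) && ((v, u) \in o))].

Definition orel (n : nat) (o : {set 'I_n * 'I_n}) : rel 'I_n :=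
  fun u v => (u, v) \in o.

Definition acyclic_or (n : nat) (o : {set 'I_n * 'I_n}) : bool :=
  [forall u, forall v, orel o u v ==> ~~ connect (orel o) v u].

(* Strict order induced by the orientation: u < v iff directed path u -> v
   (of positive length; for an acyclic orientation equivalently u != v). *)
Definition induced_lt (n : nat) (o : {set 'I_n * 'I_n}) (u v : 'I_n) : bool :=
  (u != v) && connect (orel o) u v.

Definition linext_count (n : nat) (o : {set 'I_n * 'I_n}) : nat :=
  #|[set p : 'S_n | [forall u, forall v, induced_lt o u v ==> (p u < p v)]]|.

Definition epsilon (n : nat) (e : rel 'I_n) : nat :=
  \max_(o : {set 'I_n * 'I_n} | orientation e o && acyclic_or o) linext_count o.

(* proper colouring of the subgraph induced on S with c colours
   (the guard x != y is vacuous for simple graphs, which are irreflexive) *)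
Definition colorable (n : nat) (e : rel 'I_n) (S : {set 'I_n}) (c : nat) : bool :=
  [exists f : {ffun 'I_n -> 'I_c},
     [forall x in S, forall y in S, (x != y) && e x y ==> (f x != f y)]].

Lemma colorable_n (n : nat) (e : rel 'I_n) (S : {set 'I_n}) :
  exists c, colorable e S c.
Proof.
exists n.
apply/existsP.
exists [ffun x : 'I_n => x].
apply/forall_inP => x _; apply/forall_inP => y _; apply/implyP => /andP[nxy _].
by rewrite !ffunE.
Qed.

Definition chi (n : nat) (e : rel 'I_n) (S : {set 'I_n}) : nat :=
  ex_minn (colorable_n e S).

(* the vertices v_{sigma(1)},...,v_{sigma(k)} (0-indexed: sigma 0..sigma (k-1)) *)
Definition first_k (n : nat) (s : 'S_n) (k : nat) : {set 'I_n} :=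
  s @: [set i : 'I_n | i < k].

(* Main.v *)
Require Import Defs.
From mathcomp Require Import all_boot all_order all_algebra all_fingroup.
Import Order.TTheory GRing.Theory Num.Theory.
Set Implicit Arguments. Unset Strict Implicit. Unset Printing Implicit Defensive.
Local Open Scope ring_scope.

Fixpoint prodseq (n : nat) (w : {set 'I_n} -> 'I_n -> rat) (S : {set 'I_n})
   (t : seq 'I_n) : rat :=
  match t with [::] => 1 | v :: t' => w S v * @prodseq n w (S :\ v) t' end.

Definition Sum (n : nat) (w : {set 'I_n} -> 'I_n -> rat) (S : {set 'I_n}) : rat :=
  \sum_(t <- permutations (enum S)) prodseq w S t.

Lemma Sum0 n (w : {set 'I_n} -> 'I_n -> rat) : Sum w set0 = 1.
Proof. by rewrite /Sum enum_set0 /= big_seq1. Qed.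

Lemma SumE n (w : {set 'I_n} -> 'I_n -> rat) S : S != set0 ->
  Sum w S = \sum_(v in S) w S v * Sum w (S :\ v).
Proof.
move=> SN.
have sz : (0 < size (enum S))%N.
  rewrite -cardE card_gt0 //.
rewrite /Sum (perm_big _ (permutationsE sz)) /=.
rewrite big_allpairs_dep /= undup_id ?enum_uniq //.
rewrite big_enum /=; apply: eq_bigr => v Sv.
rewrite big_distrr /=.
have pe : perm_eq (rem v (enum S)) (enum (S :\ v)).
  apply: uniq_perm; first exact: rem_uniq (enum_uniq _).
    exact: enum_uniq.
  move=> x; rewrite mem_rem_uniq ?enum_uniq // mem_enum !inE mem_enum.
  by rewrite andbC.
rewrite (perm_big _ (perm_permutations pe)) /=.
by apply: eq_bigr.
Qed.

Lemma prodseq_ge0 n (w : {set 'I_n} -> 'I_n -> rat) :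
  (forall S v, 0 <= w S v) -> forall t S, 0 <= prodseq w S t.
Proof. by move=> wp; elim=> //= v t IH S; rewrite mulr_ge0. Qed.

Lemma Sum_ge0 n (w : {set 'I_n} -> 'I_n -> rat) :
  (forall S v, 0 <= w S v) -> forall S, 0 <= Sum w S.
Proof. by move=> wp S; apply: sumr_ge0 => t _; apply: prodseq_ge0. Qed.

Lemma prodseq_big n (w : {set 'I_n} -> 'I_n -> rat) (x0 : 'I_n) t S :
  prodseq w S t = \prod_(k < size t) w (S :\: [set x in take k t]) (nth x0 t k).
Proof.
elim: t S => [|v t IH] S /=; first by rewrite big_ord0.
rewrite big_ord_recl /= IH.
have -> : [set x in [::]] = set0 :> {set 'I_n} by apply/setP=> x; rewrite !inE.
rewrite setD0; congr (_ * _); apply: eq_bigr => k _.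
by rewrite set_cons setDDl.
Qed.

Lemma first_k_take n (s : 'S_n) (k : nat) :
  first_k s k = [set x in take k (map s (enum 'I_n))].
Proof.
apply/setP=> x; rewrite /first_k !inE -map_take.
apply/imsetP/mapP => [[i]|[i]]; rewrite ?inE => Hi ->; exists i => //.
  have Ii : i \in enum 'I_n by rewrite mem_enum.
  by rewrite in_take // index_enum_ord.
have Ii : i \in enum 'I_n by rewrite mem_enum.
by rewrite inE -index_enum_ord -in_take.
Qed.

Lemma perm_of_seq n (t : seq 'I_n) : perm_eq t (enum [set: 'I_n]) ->
  exists s : 'S_n, map s (enum 'I_n) = t.
Proof.
move=> pe.
have szt : size t = n by rewrite (perm_size pe) -cardE cardsT card_ord.
have ut : uniq t by rewrite (perm_uniq pe) enum_uniq.
have finj : injective (fun i : 'I_n => nth i t i).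
  move=> i j /= eq; apply: val_inj => /=.
  rewrite (set_nth_default i j) ?szt // in eq.
  by apply/eqP; rewrite -(nth_uniq i _ _ ut) ?szt // eq.
exists (perm finj).
have szm : size (map (perm finj) (enum 'I_n)) = n by rewrite size_map size_enum_ord.
case: (posnP n) => [n0|npos].
  by rewrite (size0nil (etrans szm n0)) (size0nil (etrans szt n0)).
pose x0 := Ordinal npos.
apply: (@eq_from_nth _ x0) => [|i]; first by rewrite szm szt.
rewrite szm => Hi.
rewrite (nth_map x0) ?size_enum_ord // permE /=.
have -> : nth x0 (enum 'I_n) i = Ordinal Hi.
  by apply: val_inj => /=; rewrite nth_enum_ord.
by rewrite (set_nth_default x0) ?szt.
Qed.

Lemma bridge n (w : {set 'I_n} -> 'I_n -> rat) :
  \sum_(s : 'S_n) \prod_(k < n) w (~: first_k s k) (s k) = Sum w setT.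
Proof.
have step1 : forall s : 'S_n, \prod_(k < n) w (~: first_k s k) (s k)
     = prodseq w setT (map s (enum 'I_n)).
  move=> s; case: (posnP n) => [n0|npos].
    have -> : map s (enum 'I_n) = [::].
      by apply: size0nil; rewrite size_map size_enum_ord.
    by rewrite big1 // => k; have := ltn_ord k; rewrite {2}n0.
  rewrite (prodseq_big _ (Ordinal npos)) size_map size_enum_ord.
  apply: eq_bigr => k _.
  rewrite first_k_take setTD (nth_map (Ordinal npos)) ?size_enum_ord //.
  by rewrite nth_ord_enum.
rewrite (eq_bigr _ (fun s _ => step1 s)).
rewrite -(big_map (fun s : 'S_n => map s (enum 'I_n)) xpredT (prodseq w setT)).
rewrite /Sum; apply: perm_big; apply: uniq_perm.
- rewrite map_inj_uniq ?index_enum_uniq // => s s' eq.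
  apply/permP => i.
  have := congr1 (fun l => nth i l i) eq => /=.
  by rewrite !(nth_map i) -?enumT ?size_enum_ord // nth_ord_enum.
- exact: permutations_uniq.
move=> t; rewrite mem_permutations; apply/mapP/idP => [[s _ ->]|pe].
  apply: uniq_perm; first by rewrite map_inj_uniq ?enum_uniq //; apply: perm_inj.
    exact: enum_uniq.
  move=> x; rewrite mem_enum inE; apply/mapP; exists (s^-1 x)%g.
    by rewrite mem_enum.
  by rewrite permKV.
have [s <-] := perm_of_seq pe.
by exists s; rewrite ?mem_index_enum.
Qed.

Definition ltR n (R : rel 'I_n) (u v : 'I_n) : bool := (u != v) && R u v.
Definition MinR n (R : rel 'I_n) (S : {set 'I_n}) (x : 'I_n) : bool :=
  [forall u in S, ~~ ltR R u x].
Definition w2 n (R : rel 'I_n) (S : {set 'I_n}) (x : 'I_n) : rat := (MinR R S x)%:R.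
Definition E n (R : rel 'I_n) (S : {set 'I_n}) : rat := Sum (w2 R) S.
Definition NR n (R : rel 'I_n) (S : {set 'I_n}) (v x : 'I_n) : bool :=
  ltR R v x && [forall u in S, ltR R u x ==> (u == v)].

Lemma E_ge0 n (R : rel 'I_n) (S : {set 'I_n}) : 0 <= E R S.
Proof. by apply: Sum_ge0 => T v; rewrite /w2 ler0n. Qed.

Lemma EE n (R : rel 'I_n) (S : {set 'I_n}) : S != set0 ->
  E R S = \sum_(x in S) (MinR R S x)%:R * E R (S :\ x).
Proof. by move=> SN; rewrite /E SumE. Qed.

Lemma swap2 n (A B : {set 'I_n}) (F : 'I_n -> 'I_n -> rat) :
  \sum_(v in A) \sum_(x in B :\ v) F v x = \sum_(x in B) \sum_(v in A :\ x) F v x.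
Proof.
rewrite (exchange_big_dep (fun x => x \in B)) /=; last first.
  by move=> v x _; rewrite !inE => /andP[].
apply: eq_bigr => x Bx; apply: eq_bigl => v.
by rewrite !inE Bx andbT andbC eq_sym.
Qed.

Lemma NR_Min n (R : rel 'I_n) (S : {set 'I_n}) (v x : 'I_n) : antisymmetric R -> transitive R ->
  NR R S v x -> MinR R S v.
Proof.
move=> anti tr /andP[/andP[nvx Rvx] /forall_inP H].
apply/forall_inP => u uS; apply/negP => /andP[nuv Ruv].
have Rux : R u x := tr _ _ _ Ruv Rvx.
have nux : u != x.
  apply/negP => /eqP eux; move: Ruv; rewrite eux => Rxv.
  by move: nvx; rewrite (anti v x) ?Rvx ?Rxv ?eqxx.
by move: (H u uS); rewrite /ltR nux Rux /= (negbTE nuv).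
Qed.

Lemma Min_split n (R : rel 'I_n) (S : {set 'I_n}) (v x : 'I_n) : v \in S -> x \in S :\ v ->
  (MinR R (S :\ v) x)%:R = (MinR R S x)%:R + (NR R S v x)%:R :> rat.
Proof.
move=> vS; rewrite !inE => /andP[nxv xS].
have [M|nM] := boolP (MinR R S x).
  have -> : MinR R (S :\ v) x.
    apply/forall_inP => u; rewrite !inE => /andP[_ uS].
    by move/forall_inP: M; apply.
  suff -> : NR R S v x = false by [].
  apply/negbTE/negP => /andP[lvx _].
  by move/forall_inP: M => /(_ v vS); rewrite lvx.
have [NN|nN] := boolP (NR R S v x).
  have -> : MinR R (S :\ v) x.
    apply/forall_inP => u; rewrite !inE => /andP[nuv uS].
    move: NN => /andP[_ /forall_inP /(_ u uS)].
    by apply: contraL => ->; rewrite nuv.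
  by [].
suff -> : MinR R (S :\ v) x = false by rewrite addr0.
apply/negbTE/negP => Mv; move: nN; rewrite /NR.
have lvx : ltR R v x.
  move: nM; rewrite /MinR negb_forall_in => /existsP[u /andP[uS /negPn luv]].
  have [euv|neuv] := eqVneq u v; first by rewrite -euv.
  by move/forall_inP: Mv => /(_ u); rewrite !inE neuv uS luv => /(_ isT).
rewrite lvx /=; apply/negP/negPn/forall_inP => u uS; apply/implyP => lux.
apply/negPn/negP => nuv.
by move/forall_inP: Mv => /(_ u); rewrite !inE nuv uS lux => /(_ isT).
Qed.

Definition antichain n (R : rel 'I_n) (A : {set 'I_n}) : Prop :=
  {in A &, forall u v, ~~ ltR R u v}.

Lemma big_sub_ind n (A S : {set 'I_n}) (G : 'I_n -> rat) : A \subset S ->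
  \sum_(v in A) G v = \sum_(v in S) (if v \in A then G v else 0).
Proof.
move=> AS; rewrite -big_mkcondr /=; apply: eq_bigl => v.
by apply/idP/andP => [vA|[]//]; split => //; apply: (subsetP AS).
Qed.

Lemma antichain_le n (R : rel 'I_n) : antisymmetric R -> transitive R ->
  forall k (S : {set 'I_n}), (#|S| <= k)%N -> forall A : {set 'I_n}, A \subset S -> antichain R A ->
  \sum_(v in A) E R (S :\ v) <= E R S.
Proof.
move=> anti tr; elim=> [|k IH] S.
  rewrite leqn0 cards_eq0 => /eqP -> A; rewrite subset0 => /eqP -> _.
  by rewrite big_set0 E_ge0.
move=> cS A AS acA.
have [S0|SN] := eqVneq S set0.
  by move: AS; rewrite S0 subset0 => /eqP ->; rewrite big_set0 E_ge0.
have sub_le : \sum_(u in A) E R (S :\ u) <= \sum_(u in S) E R (S :\ u).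
  rewrite (big_sub_ind _ AS); apply: ler_sum => u _.
  by case: ifP => _ //; rewrite E_ge0.
case: (boolP (#|S| == 1%N)) => [/cards1P [v Sv] | S1].
  apply: (le_trans sub_le); rewrite Sv big_set1 setDv.
  have v0 : [set v] != set0 by apply/set0Pn; exists v; rewrite inE.
  rewrite (EE _ v0) big_set1 setDv /E Sum0.
  suff -> : MinR R [set v] v by [].
  apply/forall_inP => u; rewrite inE => /eqP ->; by rewrite /ltR eqxx.
have SvN : forall v, v \in S -> S :\ v != set0.
  move=> v vS; apply/negP => /eqP S0; move: S1.
  by rewrite (cardsD1 v S) vS S0 cards0.
rewrite (EE _ SN).
have L1 : \sum_(v in A) E R (S :\ v) = \sum_(v in A) \sum_(x in S :\ v)
   ((MinR R S x)%:R * E R (S :\ x :\ v) + (NR R S v x)%:R * E R (S :\ v :\ x)).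
  apply: eq_bigr => v vA; have vS := subsetP AS v vA.
  rewrite (EE _ (SvN v vS)); apply: eq_bigr => x xSv.
  rewrite (Min_split _ vS xSv) mulrDl; congr (_ * _ + _).
  by rewrite !setDDl setUC.
rewrite L1; under eq_bigr do rewrite big_split /=.
rewrite big_split /= swap2.
pose Nset x := [set y in S | (x \in A) && NR R S x y].
have T2 : \sum_(v in A) \sum_(x in S :\ v) (NR R S v x)%:R * E R (S :\ v :\ x)
    = \sum_(x in S) (MinR R S x)%:R * \sum_(y in Nset x) E R (S :\ x :\ y).
  rewrite (big_sub_ind _ AS); apply: eq_bigr => v vS.
  case: ifP => vA; last first.
    rewrite big1 ?mulr0 // => y; rewrite /Nset inE vA andbF.
    by case: (y \in S).
  have E1 : \sum_(x in S :\ v) (NR R S v x)%:R * E R (S :\ v :\ x)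
         = \sum_(x in Nset v) E R (S :\ v :\ x).
    rewrite (eq_bigr (fun x => if NR R S v x then E R (S :\ v :\ x) else 0)); last first.
      by move=> x _; case: (NR R S v x); rewrite ?mul1r ?mul0r.
    rewrite -big_mkcondr /=; apply: eq_bigl => x.
    rewrite /Nset !inE vA /=.
    case Nx: (NR R S v x); rewrite ?andbF ?andbT //.
    move: Nx => /andP[/andP[nvx _] _].
    by rewrite eq_sym nvx.
  rewrite E1; case: (boolP (MinR R S v)) => Mv; first by rewrite mul1r.
  rewrite mul0r big1 // => x; rewrite /Nset inE => /andP[_ /andP[_ Nx]].
  by move: Mv; rewrite (NR_Min anti tr Nx).
rewrite T2 -big_split /=; apply: ler_sum => x xS.
case: (boolP (MinR R S x)) => Mx; last first.
  have z : (false%:R : rat) = 0 by [].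
  rewrite z !mul0r big1 ?add0r // => v _; by rewrite ?z mul0r.
have o : (true%:R : rat) = 1 by [].
rewrite o mul1r.
under eq_bigr do rewrite ?o mul1r.
have disj : [disjoint A :\ x & Nset x].
  rewrite -setI_eq0; apply/eqP/setP => y; rewrite !inE.
  apply/negP => /andP[/andP[nyx yA] /andP[yS /andP[xA /andP[lxy _]]]].
  by move: (acA x y xA yA); rewrite lxy.
rewrite -bigU //= mul1r.
rewrite (eq_bigl (fun i => i \in (A :\ x) :|: Nset x)); last by move=> i; rewrite !inE.
apply: IH.
- by move: cS; rewrite (cardsD1 x S) xS.
- apply/subsetP => y; rewrite !inE => /orP[/andP[-> /(subsetP AS) ->] //|].
  by move=> /andP[-> /andP[_ /andP[/andP[nxy _] _]]]; rewrite eq_sym nxy.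
move=> u v; rewrite !inE => Hu Hv; apply/negP => luv.
case/orP: Hu => [/andP[nux uA]|/andP[uS /andP[xA Nu]]];
case/orP: Hv => [/andP[nvx vA]|/andP[vS /andP[_ Nv]]].
- by move: (acA u v uA vA); rewrite luv.
- move: Nv => /andP[_ /forall_inP /(_ u (subsetP AS u uA))].
  by rewrite luv (negbTE nux).
- move: Nu => /andP[/andP[nxu Rxu] _].
  move: luv => /andP[nuv Ruv].
  have Rxv := tr _ _ _ Rxu Ruv.
  by move: (acA x v xA vA); rewrite /ltR eq_sym nvx Rxv.
- move: Nv => /andP[_ /forall_inP /(_ u uS)]; rewrite luv /= => /eqP eux.
  by move: Nu => /andP[/andP[]]; rewrite eux eqxx.
Qed.

Lemma chi_col n (e : rel 'I_n) (S : {set 'I_n}) : colorable e S (chi e S).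
Proof. by rewrite /chi; case: ex_minnP. Qed.

Lemma chi_pos n (e : rel 'I_n) (S : {set 'I_n}) : S != set0 -> (0 < chi e S)%N.
Proof.
move=> /set0Pn [x xS]; rewrite lt0n; apply/negP => /eqP c0.
have := chi_col e S; rewrite c0 => /existsP [f _].
by case: (f x).
Qed.

Lemma color_bound n (e : rel 'I_n) (R : rel 'I_n) :
  (forall u v, u != v -> e u v = R u v || R v u) ->
  antisymmetric R -> transitive R -> forall S : {set 'I_n},
  \sum_(v in S) E R (S :\ v) <= (chi e S)%:R * E R S.
Proof.
move=> comp anti tr S.
have := chi_col e S; move: (chi e S) => c /existsP [f /forall_inP col].
rewrite (partition_big (fun v => f v) xpredT) //=.
have -> : (c%:R * E R S) = \sum_(j < c) E R S.
  by rewrite sumr_const card_ord mulr_natl.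
apply: ler_sum => j _.
rewrite (eq_bigl (fun v => v \in [set v in S | f v == j])); last by move=> v; rewrite inE.
apply: (antichain_le anti tr (leqnn _)).
  by apply/subsetP => v; rewrite inE => /andP[].
move=> u v; rewrite !inE => /andP[uS /eqP fu] /andP[vS /eqP fv].
apply/negP => /andP[nuv Ruv].
have := col u uS => /forall_inP /(_ v vS).
by rewrite nuv comp // Ruv fu fv eqxx.
Qed.

Definition w1 n (e : rel 'I_n) (S : {set 'I_n}) (v : 'I_n) : rat := ((chi e S)%:R)^-1.

Lemma F_le_E n (e : rel 'I_n) (R : rel 'I_n) :
  (forall u v, u != v -> e u v = R u v || R v u) ->
  antisymmetric R -> transitive R -> forall k (S : {set 'I_n}), (#|S| <= k)%N ->
  Sum (w1 e) S <= E R S.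
Proof.
move=> comp anti tr; elim=> [|k IH] S.
  by rewrite leqn0 cards_eq0 => /eqP ->; rewrite /E !Sum0.
move=> cS; have [S0|SN] := eqVneq S set0; first by rewrite S0 /E !Sum0.
rewrite SumE //.
have cp : 0 < (chi e S)%:R :> rat by rewrite ltr0n chi_pos.
apply: (@le_trans _ _ (((chi e S)%:R)^-1 * \sum_(v in S) E R (S :\ v))).
  rewrite big_distrr /=; apply: ler_sum => v vS.
  apply: ler_wpM2l; first by rewrite /w1 invr_ge0 ltW.
  apply: IH.
  by move: cS; rewrite (cardsD1 v S) vS.
rewrite ler_pdivrMl //.
exact: color_bound.
Qed.

Lemma prod_bool n (b : 'I_n -> bool) :
  \prod_(k < n) (b k)%:R = ([forall k, b k])%:R :> rat.
Proof.
case: (boolP [forall k, b k]) => [/forallP H|].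
  by rewrite big1 // => k _; rewrite H.
rewrite negb_forall => /existsP [k nk].
by rewrite (bigD1 k) //= (negbTE nk) mul0r.
Qed.

Lemma mem_first_k n (s : 'S_n) (k : nat) x :
  (x \in first_k s k) = ((s^-1)%g x < k)%N.
Proof.
rewrite /first_k; apply/imsetP/idP => [[i]|H].
  by rewrite inE => Hi ->; rewrite permK.
by exists (s^-1 x)%g; rewrite ?inE ?permKV.
Qed.

Lemma linext_pointwise n (R : rel 'I_n) (s : 'S_n) :
  [forall u, forall v, ltR R u v ==> ((s^-1)%g u < (s^-1)%g v)%N]
  = [forall k : 'I_n, MinR R (~: first_k s k) (s k)].
Proof.
apply/idP/idP => [/forallP H|/forallP H].
  apply/forallP => k; apply/forall_inP => u; rewrite inE mem_first_k -leqNgt => ku.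
  apply/negP => luk; have := H u => /forallP /(_ (s k)); rewrite luk permK /=.
  by rewrite ltnNge ku.
apply/forallP => u; apply/forallP => v; apply/implyP => luv.
rewrite ltnNge; apply/negP => vu.
have := H ((s^-1)%g v) => /forall_inP /(_ u).
by rewrite inE mem_first_k -leqNgt vu permKV luv => /(_ isT).
Qed.

Lemma connect_R n (R : rel 'I_n) (o : {set 'I_n * 'I_n}) :
  reflexive R -> transitive R -> (forall u v, orel o u v -> R u v) ->
  forall x y, connect (orel o) x y -> R x y.
Proof.
move=> refl tr sub x y /connectP [p pth ->] {y}.
elim: p x pth => [|y p IH] x /=; first by move=> _; apply: refl.
by move=> /andP[oxy pth]; apply: tr (sub _ _ oxy) (IH _ pth).
Qed.

Theorem theorem4p3 (n : nat) (e : rel 'I_n)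
  (e_sym : symmetric e) (e_irr : irreflexive e)
  (e_comp : comparability_graph e) :
  \sum_(s : 'S_n) \prod_(k < n) ((chi e (~: first_k s k))%:R : rat)^-1
    <= (epsilon e)%:R.
Proof.
have [R [refl [anti [tr comp]]]] := e_comp.
pose o := [set p : 'I_n * 'I_n | ltR R p.1 p.2].
have oE : forall u v, orel o u v = ltR R u v by move=> u v; rewrite /orel inE.
have subR : forall u v, orel o u v -> R u v by move=> u v; rewrite oE => /andP[].
have ilt : forall u v, induced_lt o u v = ltR R u v.
  move=> u v; rewrite /induced_lt; apply/andP/andP => [[nuv c]|[nuv Ruv]].
    by split => //; apply: (connect_R refl tr subR).
  by split => //; apply: connect1; rewrite oE /ltR nuv.
have ori : orientation e o.
  apply/forallP => u; apply/forallP => v; rewrite !inE /ltR /=.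
  have [->|nuv] := eqVneq u v; first by rewrite e_irr.
  rewrite /= comp // eqxx /=; apply/negP => /andP[Ruv Rvu].
  by move: nuv; rewrite (anti u v) ?Ruv ?Rvu ?eqxx.
have acy : acyclic_or o.
  apply/forallP => u; apply/forallP => v; apply/implyP => ouv.
  apply/negP => /(connect_R refl tr subR) Rvu.
  move: ouv; rewrite oE => /andP[nuv Ruv].
  by move: nuv; rewrite (anti u v) ?Ruv ?Rvu ?eqxx.
have epsge : (linext_count o <= epsilon e)%N.
  rewrite /epsilon; apply: (@leq_bigmax_cond _ (fun o => orientation e o && acyclic_or o) (@linext_count n) o).
  by rewrite ori acy.
have linE : (linext_count o)%:R = E R setT :> rat.
  rewrite /E -bridge /linext_count.
  rewrite -sum1_card natr_sum big_mkcond /=.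
  rewrite (reindex_inj (@invg_inj _)) /=.
  apply: eq_bigr => s _.
  rewrite /w2 prod_bool -linext_pointwise inE.
  rewrite (eq_forallb (fun u => eq_forallb (fun v => congr1 (fun b => b ==> _) (ilt u v)))).
  by case: (boolP [forall u, forall v, _]).
rewrite (_ : \sum_(s : 'S_n) _ = Sum (w1 e) setT); last by rewrite -bridge.
apply: (le_trans (@F_le_E n e R comp anti tr _ setT (leqnn _))).
by rewrite -linE ler_nat.
Qed.
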